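(* Let $(Y,\|\cdot\|)$ be a normed space and $X$ its topological dual. Let $(g_n)$ be functions on $Y$ with: (a) each $g_n$ real-valued and convex; (b) $g_n\to g$ pointwise; (d'') there is $c>0$ with $|g_n(y)|\le c(1+\|y\|)$ for all $y\in Y$, $n\ge1$. Then $(g_n^* )$ $\Gamma$-converges to $g^*$ with respect to $\sigma(X,Y)$.
   Context: Convex conjugate: $g^*(x)=\sup_{y\in Y}\{\langle x,y\rangle-g(y)\}$, $x\in X$. $\Gamma$-limit: $\Gamma\text{-}\lim f_n(x)=\sup_{V\in\mathcal{N}(x)}\lim_n\inf_{y\in V}f_n(y)$. *)

(* Defs.v *)
From Stdlib Require Import Reals Lra List ClassicalEpsilon.
Open Scope R_scope.

Record NormedSpace := {
  ns_car :> Type;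
  ns_zero : ns_car;
  ns_add : ns_car -> ns_car -> ns_car;
  ns_opp : ns_car -> ns_car;
  ns_scal : R -> ns_car -> ns_car;
  ns_norm : ns_car -> R;
  ns_add_assoc : forall u v w, ns_add u (ns_add v w) = ns_add (ns_add u v) w;
  ns_add_comm : forall u v, ns_add u v = ns_add v u;
  ns_add_zero : forall u, ns_add u ns_zero = u;
  ns_add_opp : forall u, ns_add u (ns_opp u) = ns_zero;
  ns_scal_assoc : forall a b u, ns_scal a (ns_scal b u) = ns_scal (a * b) u;
  ns_scal_one : forall u, ns_scal 1 u = u;
  ns_scal_distr_l : forall a u v, ns_scal a (ns_add u v) = ns_add (ns_scal a u) (ns_scal a v);
  ns_scal_distr_r : forall a b u, ns_scal (a + b) u = ns_add (ns_scal a u) (ns_scal b u);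
  ns_norm_nonneg : forall u, 0 <= ns_norm u;
  ns_norm_eq0 : forall u, ns_norm u = 0 -> u = ns_zero;
  ns_norm_scal : forall a u, ns_norm (ns_scal a u) = Rabs a * ns_norm u;
  ns_norm_triangle : forall u v, ns_norm (ns_add u v) <= ns_norm u + ns_norm v
}.

Arguments ns_zero {_}.
Arguments ns_add {_}.
Arguments ns_opp {_}.
Arguments ns_scal {_}.
Arguments ns_norm {_}.

Definition is_linear_functional {Y : NormedSpace} (f : Y -> R) : Prop :=
  (forall u v, f (ns_add u v) = f u + f v) /\
  (forall a u, f (ns_scal a u) = a * f u).

Definition is_bounded_functional {Y : NormedSpace} (f : Y -> R) : Prop :=
  exists M : R, forall u, Rabs (f u) <= M * ns_norm u.

(* X = Y^* : continuous (= bounded) linear functionals on Y *)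
Definition dual (Y : NormedSpace) : Type :=
  { f : Y -> R | is_linear_functional f /\ is_bounded_functional f }.

Definition pair {Y : NormedSpace} (x : dual Y) (y : Y) : R := proj1_sig x y.

Inductive Rbar : Type :=
| Finite : R -> Rbar
| p_infty : Rbar
| m_infty : Rbar.

Definition Rbar_le (a b : Rbar) : Prop :=
  match a, b with
  | m_infty, _ => True
  | _, p_infty => True
  | Finite x, Finite y => x <= y
  | _, _ => False
  end.

Definition is_sup (S : Rbar -> Prop) (s : Rbar) : Prop :=
  (forall a, S a -> Rbar_le a s) /\
  (forall b, (forall a, S a -> Rbar_le a b) -> Rbar_le s b).

Definition is_inf (S : Rbar -> Prop) (s : Rbar) : Prop :=
  (forall a, S a -> Rbar_le s a) /\
  (forall b, (forall a, S a -> Rbar_le b a) -> Rbar_le b s).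

(* supremum / infimum in [-oo, +oo] (they always exist) *)
Definition Rbar_sup (S : Rbar -> Prop) : Rbar :=
  epsilon (inhabits m_infty) (is_sup S).
Definition Rbar_inf (S : Rbar -> Prop) : Rbar :=
  epsilon (inhabits p_infty) (is_inf S).

Definition Rbar_liminf (u : nat -> Rbar) : Rbar :=
  Rbar_sup (fun a => exists n, a = Rbar_inf (fun b => exists k, (n <= k)%nat /\ b = u k)).
Definition Rbar_limsup (u : nat -> Rbar) : Rbar :=
  Rbar_inf (fun a => exists n, a = Rbar_sup (fun b => exists k, (n <= k)%nat /\ b = u k)).

Definition convex_fun {Y : NormedSpace} (g : Y -> R) : Prop :=
  forall (u v : Y) (t : R), 0 <= t <= 1 ->
    g (ns_add (ns_scal t u) (ns_scal (1 - t) v)) <= t * g u + (1 - t) * g v.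

Definition conjugate {Y : NormedSpace} (g : Y -> R) (x : dual Y) : Rbar :=
  Rbar_sup (fun a => exists y : Y, a = Finite (pair x y - g y)).

Definition weakstar_nbhd {Y : NormedSpace} (x : dual Y) (V : dual Y -> Prop) : Prop :=
  exists (ys : list Y) (eps : R), 0 < eps /\
    forall x' : dual Y,
      (forall y, In y ys -> Rabs (pair x' y - pair x y) < eps) -> V x'.

Definition inf_on {Y : NormedSpace} (V : dual Y -> Prop) (f : dual Y -> Rbar) : Rbar :=
  Rbar_inf (fun a => exists x', V x' /\ a = f x').

Definition gamma_liminf {Y : NormedSpace} (f : nat -> dual Y -> Rbar) (x : dual Y) : Rbar :=
  Rbar_sup (fun a => exists V, weakstar_nbhd x V /\
                               a = Rbar_liminf (fun n => inf_on V (f n))).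

Definition gamma_limsup {Y : NormedSpace} (f : nat -> dual Y -> Rbar) (x : dual Y) : Rbar :=
  Rbar_sup (fun a => exists V, weakstar_nbhd x V /\
                               a = Rbar_limsup (fun n => inf_on V (f n))).

Definition gamma_converges {Y : NormedSpace} (f : nat -> dual Y -> Rbar) (F : dual Y -> Rbar) : Prop :=
  forall x, gamma_liminf f x = F x /\ gamma_limsup f x = F x.

(* Main.v *)
Require Import Defs.
From Stdlib Require Import Reals Lra Lia List Classical ClassicalEpsilon FunctionalExtensionality PropExtensionality.
Open Scope R_scope.

Arguments ns_add_assoc {_}. Arguments ns_add_comm {_}. Arguments ns_add_zero {_}.
Arguments ns_add_opp {_}. Arguments ns_scal_assoc {_}. Arguments ns_scal_one {_}.
Arguments ns_scal_distr_l {_}. Arguments ns_scal_distr_r {_}. Arguments ns_norm_nonneg {_}.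
Arguments ns_norm_eq0 {_}. Arguments ns_norm_scal {_}. Arguments ns_norm_triangle {_}.

Definition vsub {Y : NormedSpace} (u v : Y) : Y := ns_add u (ns_opp v).

Lemma add_0l {Y : NormedSpace} (u : Y) : ns_add ns_zero u = u.
Proof. rewrite ns_add_comm; apply ns_add_zero. Qed.

Lemma add_cancel_r {Y : NormedSpace} (u v w : Y) : ns_add u w = ns_add v w -> u = v.
Proof.
  intro H. rewrite <- (ns_add_zero u), <- (ns_add_zero v), <- (ns_add_opp w).
  rewrite !ns_add_assoc, H. reflexivity.
Qed.

Lemma scal_0 {Y : NormedSpace} (u : Y) : ns_scal 0 u = ns_zero.
Proof.
  apply (add_cancel_r _ _ (ns_scal 0 u)). rewrite add_0l, <- ns_scal_distr_r.
  f_equal; ring.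
Qed.

Lemma scal_zero {Y : NormedSpace} (a : R) : ns_scal a (@ns_zero Y) = ns_zero.
Proof. rewrite <- (scal_0 (@ns_zero Y)), ns_scal_assoc. now rewrite Rmult_0_r. Qed.

Lemma opp_scal {Y : NormedSpace} (u : Y) : ns_opp u = ns_scal (-1) u.
Proof.
  apply (add_cancel_r _ _ u). rewrite ns_add_comm, ns_add_opp.
  rewrite <- (ns_scal_one u) at 2. rewrite <- ns_scal_distr_r.
  replace (-1 + 1) with 0 by ring. rewrite scal_0. reflexivity.
Qed.

Lemma add_opp_l {Y : NormedSpace} (u : Y) : ns_add (ns_opp u) u = ns_zero.
Proof. rewrite ns_add_comm; apply ns_add_opp. Qed.

Lemma norm_zero {Y : NormedSpace} : ns_norm (@ns_zero Y) = 0.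
Proof. rewrite <- (scal_0 (@ns_zero Y)), ns_norm_scal, Rabs_R0; ring. Qed.

Lemma Rabs_m1 : Rabs (-1) = 1.
Proof. unfold Rabs; destruct Rcase_abs; lra. Qed.

Lemma norm_opp {Y : NormedSpace} (u : Y) : ns_norm (ns_opp u) = ns_norm u.
Proof. rewrite opp_scal, ns_norm_scal, Rabs_m1; ring. Qed.

Lemma add4 {Y : NormedSpace} (p q r s : Y) :
  ns_add (ns_add p q) (ns_add r s) = ns_add (ns_add p r) (ns_add q s).
Proof.
  rewrite <- !ns_add_assoc. f_equal. rewrite !ns_add_assoc. f_equal. apply ns_add_comm.
Qed.

Lemma scal_add_same {Y : NormedSpace} (a b : R) (u : Y) :
  ns_add (ns_scal a u) (ns_scal b u) = ns_scal (a + b) u.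
Proof. now rewrite ns_scal_distr_r. Qed.

Lemma scal_opp {Y : NormedSpace} (a : R) (u : Y) : ns_scal a (ns_opp u) = ns_scal (- a) u.
Proof. rewrite opp_scal, ns_scal_assoc. f_equal; ring. Qed.

Lemma vsub_self {Y : NormedSpace} (u : Y) : vsub u u = ns_zero.
Proof. apply ns_add_opp. Qed.

Lemma vsub_eq0 {Y : NormedSpace} (u v : Y) : vsub u v = ns_zero -> u = v.
Proof.
  unfold vsub; intro H. rewrite <- (ns_add_zero u), <- (add_opp_l v), ns_add_assoc, H.
  apply add_0l.
Qed.

Lemma norm_vsub_sym {Y : NormedSpace} (u v : Y) : ns_norm (vsub u v) = ns_norm (vsub v u).
Proof.
  unfold vsub. rewrite <- norm_opp. f_equal.
  rewrite !opp_scal, ns_scal_distr_l, ns_scal_assoc, ns_add_comm. f_equal.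
  replace (-1 * -1) with 1 by ring. rewrite ns_scal_one; reflexivity.
Qed.

Lemma vsub_lin {Y : NormedSpace} (a b : R) (u p q : Y) :
  vsub (ns_add (ns_scal a u) p) (ns_add (ns_scal b u) q) = ns_add (ns_scal (a - b) u) (vsub p q).
Proof.
  unfold vsub. rewrite (opp_scal (ns_add _ _)), ns_scal_distr_l, ns_scal_assoc, <- (opp_scal q).
  rewrite add4, scal_add_same. f_equal. f_equal. ring.
Qed.

Lemma scal_add4 {Y : NormedSpace} (a b : R) (u v p q : Y) :
  ns_add (ns_scal a (ns_add u p)) (ns_scal b (ns_add v q)) =
  ns_add (ns_add (ns_scal a u) (ns_scal b v)) (ns_add (ns_scal a p) (ns_scal b q)).
Proof. rewrite !ns_scal_distr_l. apply add4. Qed.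

Lemma Rbar_le_refl a : Rbar_le a a.
Proof. destruct a; simpl; auto; lra. Qed.

Lemma Rbar_le_trans a b c : Rbar_le a b -> Rbar_le b c -> Rbar_le a c.
Proof. destruct a, b, c; simpl; intros; auto; try lra; contradiction. Qed.

Lemma Rbar_le_antisym a b : Rbar_le a b -> Rbar_le b a -> a = b.
Proof. destruct a, b; simpl; intros; auto; try contradiction. f_equal; lra. Qed.

Lemma sup_exists (S : Rbar -> Prop) : exists s, is_sup S s.
Proof.
  destruct (classic (S p_infty)) as [Hp|Hp].
  { exists p_infty; split; [intros a _; destruct a; simpl; auto|].
    intros b Hb. apply Hb; auto. }
  destruct (classic (exists r, S (Finite r))) as [[r0 Hr0]|Hn].
  - destruct (classic (bound (fun r => S (Finite r)))) as [Hb|Hb].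
    + destruct (completeness _ Hb (ex_intro _ r0 Hr0)) as [l [Hl1 Hl2]].
      exists (Finite l); split.
      * intros a Ha; destruct a; simpl; auto.
      * intros b Hbb; destruct b; simpl; auto.
        all: try (apply Hl2; intros x Hx; apply (Hbb (Finite x) Hx)).
        all: try (apply (Hbb (Finite r0) Hr0)).
    + exists p_infty; split; [intros a _; destruct a; simpl; auto|].
      intros b Hbb; destruct b; simpl; auto.
      * apply Hb. exists r. intros x Hx. apply (Hbb (Finite x) Hx).
      * apply (Hbb (Finite r0) Hr0).
  - exists m_infty; split.
    + intros a Ha; destruct a; simpl; auto. apply Hn; eauto.
    + intros b _; destruct b; simpl; auto.
Qed.

Lemma inf_exists (S : Rbar -> Prop) : exists s, is_inf S s.
Proof.
  destruct (sup_exists (fun b => forall a, S a -> Rbar_le b a)) as [l [H1 H2]].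
  exists l; split.
  - intros a Ha. apply H2. intros b Hb. apply Hb; auto.
  - intros b Hb. apply H1; auto.
Qed.

Lemma Rbar_sup_spec S : is_sup S (Rbar_sup S).
Proof. unfold Rbar_sup. apply epsilon_spec. apply sup_exists. Qed.
Lemma Rbar_inf_spec S : is_inf S (Rbar_inf S).
Proof. unfold Rbar_inf. apply epsilon_spec. apply inf_exists. Qed.

Lemma le_sup (S : Rbar -> Prop) a : S a -> Rbar_le a (Rbar_sup S).
Proof. intro H; apply (proj1 (Rbar_sup_spec S)); auto. Qed.
Lemma sup_le (S : Rbar -> Prop) b : (forall a, S a -> Rbar_le a b) -> Rbar_le (Rbar_sup S) b.
Proof. intro H; apply (proj2 (Rbar_sup_spec S)); auto. Qed.
Lemma inf_le (S : Rbar -> Prop) a : S a -> Rbar_le (Rbar_inf S) a.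
Proof. intro H; apply (proj1 (Rbar_inf_spec S)); auto. Qed.
Lemma le_inf (S : Rbar -> Prop) b : (forall a, S a -> Rbar_le b a) -> Rbar_le b (Rbar_inf S).
Proof. intro H; apply (proj2 (Rbar_inf_spec S)); auto. Qed.

Lemma liminf_le_limsup (u : nat -> Rbar) : Rbar_le (Rbar_liminf u) (Rbar_limsup u).
Proof.
  unfold Rbar_liminf, Rbar_limsup. apply sup_le. intros a [n ->].
  apply le_inf. intros b [m ->].
  apply Rbar_le_trans with (u (Nat.max n m)).
  - apply inf_le. exists (Nat.max n m); split; auto; lia.
  - apply le_sup. exists (Nat.max n m); split; auto; lia.
Qed.

Lemma Finite_le_eps a b : (forall e, 0 < e -> Rbar_le (Finite (a - e)) b) -> Rbar_le (Finite a) b.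
Proof.
  intro H; destruct b; simpl; auto.
  - apply Rnot_lt_le; intro Hlt. specialize (H ((a - r)/2)). simpl in H. lra.
  - apply (H 1); lra.
Qed.

Lemma le_Finite_eps a b : (forall e, 0 < e -> Rbar_le b (Finite (a + e))) -> Rbar_le b (Finite a).
Proof.
  intro H; destruct b; simpl; auto.
  - apply Rnot_lt_le; intro Hlt. specialize (H ((r - a)/2)). simpl in H. lra.
  - apply (H 1); lra.
Qed.

Lemma liminf_ge (u : nat -> Rbar) (a : R) (N : nat) :
  (forall k, (N <= k)%nat -> Rbar_le (Finite a) (u k)) -> Rbar_le (Finite a) (Rbar_liminf u).
Proof.
  intro H. unfold Rbar_liminf.
  apply Rbar_le_trans with (Rbar_inf (fun b => exists k, (N <= k)%nat /\ b = u k)).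
  - apply le_inf. intros b [k [Hk ->]]. auto.
  - apply le_sup. eauto.
Qed.

Lemma limsup_le (u : nat -> Rbar) (a : R) (N : nat) :
  (forall k, (N <= k)%nat -> Rbar_le (u k) (Finite a)) -> Rbar_le (Rbar_limsup u) (Finite a).
Proof.
  intro H. unfold Rbar_limsup.
  apply Rbar_le_trans with (Rbar_sup (fun b => exists k, (N <= k)%nat /\ b = u k)).
  - apply inf_le. eauto.
  - apply sup_le. intros b [k [Hk ->]]. auto.
Qed.

Definition sub {T : Type} (A B : T -> Prop) := forall x, A x -> B x.

Lemma set_ext {T : Type} (A B : T -> Prop) : sub A B -> sub B A -> A = B.
Proof.
  intros H1 H2. apply functional_extensionality; intro x.
  apply propositional_extensionality; split; auto.
Qed.

Definition bigU {T : Type} (F : (T -> Prop) -> Prop) : T -> Prop :=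
  fun x => exists S, F S /\ S x.

Definition compat {T : Type} (le : T -> T -> Prop) (S : T -> Prop) (t : T) :=
  forall c, S c -> le c t \/ le t c.
Definition pickP {T : Type} (le : T -> T -> Prop) (S : T -> Prop) (t : T) :=
  ~ S t /\ compat le S t.
Definition pick {T : Type} (t0 : T) le (S : T -> Prop) : T := epsilon (inhabits t0) (pickP le S).
Definition fS {T : Type} (t0 : T) le (S : T -> Prop) : T -> Prop :=
  fun x => S x \/ ((exists t, pickP le S t) /\ x = pick t0 le S).

Inductive tw {T : Type} (t0 : T) le : (T -> Prop) -> Prop :=
| tw_f : forall S, tw t0 le S -> tw t0 le (fS t0 le S)
| tw_u : forall F, (forall S, F S -> tw t0 le S) -> tw t0 le (bigU F).

Lemma fS_incr {T} (t0 : T) le S : sub S (fS t0 le S).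
Proof. intros x Hx; left; auto. Qed.

Definition extreme {T} (t0 : T) le (c : T -> Prop) :=
  forall x, tw t0 le x -> sub x c -> ~ sub c x -> sub (fS t0 le x) c.

Lemma L1 {T} (t0 : T) le c : extreme t0 le c ->
  forall x, tw t0 le x -> sub x c \/ sub (fS t0 le c) x.
Proof.
  intros Hc x Hx. induction Hx as [S HS IH | F HF IH].
  - destruct IH as [H|H].
    + destruct (classic (sub c S)) as [H'|H'].
      * right. rewrite (set_ext S c H H'). intros y Hy; auto.
      * left. apply Hc; auto.
    + right. intros y Hy. left. auto.
  - destruct (classic (exists S, F S /\ sub (fS t0 le c) S)) as [[S [HS1 HS2]]|Hn].
    + right. intros y Hy. exists S; auto.
    + left. intros y [S [HS Hy]]. destruct (IH S HS) as [H|H]; auto.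
      exfalso; apply Hn; eauto.
Qed.

Lemma L2 {T} (t0 : T) le : forall x, tw t0 le x -> extreme t0 le x.
Proof.
  intros x Hx. induction Hx as [c Hc IH | F HF IH].
  - intros x Hx Hxc Hn.
    destruct (L1 t0 le c IH x Hx) as [H|H]; [|contradiction].
    destruct (classic (sub c x)) as [H'|H'].
    + rewrite (set_ext x c H H'). intros y Hy; auto.
    + intros y Hy. left. apply (IH x Hx H H'); auto.
  - intros x Hx Hxc Hn.
    destruct (classic (exists c, F c /\ ~ sub c x)) as [[c [Hc1 Hc2]]|Hno].
    + destruct (L1 t0 le c (IH c Hc1) x Hx) as [H|H].
      * intros y Hy. exists c. split; auto. apply (IH c Hc1 x Hx H Hc2); auto.
      * exfalso. apply Hc2. intros y Hy. apply H. left; auto.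
    + exfalso. apply Hn. intros y [c [Hc Hy]].
      destruct (classic (sub c x)) as [H|H]; auto. exfalso; apply Hno; eauto.
Qed.

Lemma tw_total {T} (t0 : T) le x y : tw t0 le x -> tw t0 le y -> sub x y \/ sub y x.
Proof.
  intros Hx Hy. destruct (L1 t0 le y (L2 t0 le y Hy) x Hx) as [H|H]; auto.
  right. intros z Hz. apply H. left; auto.
Qed.

Definition chain {T} (le : T -> T -> Prop) (C : T -> Prop) :=
  forall a b, C a -> C b -> le a b \/ le b a.

Lemma tw_chain {T} (t0 : T) le : (forall x, le x x) ->
  forall x, tw t0 le x -> chain le x.
Proof.
  intros Hrefl x Hx. induction Hx as [S HS IH | F HF IH].
  - intros a b [Ha|[He ->]] [Hb|[He' ->]]; auto.
    + assert (Hp := epsilon_spec (inhabits t0) (pickP le S) He'). destruct Hp as [_ Hp].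
      apply Hp; auto.
    + assert (Hp := epsilon_spec (inhabits t0) (pickP le S) He). destruct Hp as [_ Hp].
      destruct (Hp b Hb); auto.
  - intros a b [S1 [H1 Ha]] [S2 [H2 Hb]].
    destruct (tw_total t0 le S1 S2 (HF S1 H1) (HF S2 H2)) as [H|H].
    + apply (IH S2 H2); auto.
    + apply (IH S1 H1); auto.
Qed.

Lemma hausdorff {T} (t0 : T) le : (forall x, le x x) ->
  exists U, chain le U /\ forall t : T, compat le U t -> U t.
Proof.
  intros Hrefl. set (U := bigU (tw t0 le)).
  assert (HU : tw t0 le U) by (apply tw_u; auto).
  exists U; split.
  - apply (tw_chain t0); auto.
  - intros t Ht. apply NNPP; intro Hn.
    assert (He : exists t, pickP le U t) by (exists t; split; auto).
    assert (Hp := epsilon_spec (inhabits t0) (pickP le U) He). destruct Hp as [Hp _].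
    apply Hp. exists (fS t0 le U). split.
    + apply tw_f; auto.
    + right. split; auto.
Qed.

Lemma zorn {T} (le : T -> T -> Prop) :
  (forall x, le x x) -> (forall x y z, le x y -> le y z -> le x z) ->
  (forall C, chain le C -> exists u, forall a, C a -> le a u) ->
  exists m, forall t, le m t -> le t m.
Proof.
  intros Hr Ht Hc.
  destruct (Hc (fun _ => False)) as [t0 _]. { intros a b []. }
  destruct (hausdorff t0 le Hr) as [U [HU Hmax]].
  destruct (Hc U HU) as [m Hm]. exists m. intros t Hmt.
  apply Hm, Hmax. intros c Hc'. left. apply Ht with m; auto.
Qed.

Record goodR {Y : NormedSpace} {Z : Type} (Phi : Y -> Z -> R) (D : Y -> Prop) (l : Y -> R) : Prop := {
  g0 : D ns_zero;
  gadd : forall u v, D u -> D v -> D (ns_add u v);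
  gscal : forall a u, D u -> D (ns_scal a u);
  ladd : forall u v, D u -> D v -> l (ns_add u v) = l u + l v;
  lscal : forall a u, D u -> l (ns_scal a u) = a * l u;
  ldom : forall u b, D u -> l u <= Phi u b
}.

Lemma good_l0 {Y : NormedSpace} {Z} Phi D l : @goodR Y Z Phi D l -> l ns_zero = 0.
Proof.
  intro H. rewrite <- (scal_0 (@ns_zero Y)). rewrite (lscal _ _ _ H); [ring|apply (g0 _ _ _ H)].
Qed.

Lemma add_eq0_opp {Y : NormedSpace} (X W : Y) : ns_add X W = ns_zero -> X = ns_opp W.
Proof.
  intro H. rewrite <- (ns_add_zero X), <- (ns_add_opp W), ns_add_assoc, H. apply add_0l.
Qed.

Lemma real_key s t a b c d : 0 < s -> 0 < t ->
  t/(s+t)*a + (1 - t/(s+t))*b <= t/(s+t)*c + (1 - t/(s+t))*d -> (a - c)/s <= (d - b)/t.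
Proof.
  intros Hs Ht H.
  assert (H' : t*a + s*b <= t*c + s*d).
  { apply Rmult_le_compat_l with (r := s+t) in H; [|lra].
    replace ((s + t) * (t / (s + t) * a + (1 - t / (s + t)) * b)) with (t*a + s*b) in H by (field; lra).
    replace ((s + t) * (t / (s + t) * c + (1 - t / (s + t)) * d)) with (t*c + s*d) in H by (field; lra).
    exact H. }
  apply (Rmult_le_reg_r (s*t)); [nra|].
  replace ((a - c)/s*(s*t)) with ((a-c)*t) by (field; lra).
  replace ((d - b)/t*(s*t)) with ((d-b)*s) by (field; lra). nra.
Qed.


Lemma HB_ext {Y : NormedSpace} {Z : Type} (z0 : Z) (Phi : Y -> Z -> R)
  (Hconv : forall u v a b t, 0 <= t <= 1 -> exists c,
      Phi (ns_add (ns_scal t u) (ns_scal (1-t) v)) c <= t * Phi u a + (1-t) * Phi v b)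
  (D : Y -> Prop) (l : Y -> R) (Hg : goodR Phi D l) (z : Y) (Hz : ~ D z) :
  exists D' l', goodR Phi D' l' /\ sub D D' /\ (forall y, D y -> l y = l' y) /\ D' z.
Proof.
  set (Aset := fun r => exists e s b, D e /\ 0 < s /\
                 r = (l e - Phi (ns_add e (ns_scal (-s) z)) b) / s).
  assert (Hkey : forall e s b e' t b', D e -> 0 < s -> D e' -> 0 < t ->
    (l e - Phi (ns_add e (ns_scal (-s) z)) b)/s <= (Phi (ns_add e' (ns_scal t z)) b' - l e')/t).
  { intros e s b e' t b' He Hs He' Ht.
    destruct (Hconv (ns_add e (ns_scal (-s) z)) (ns_add e' (ns_scal t z)) b b' (t/(s+t)))
      as [c Hc].
    { split; [apply Rlt_le, Rdiv_lt_0_compat; lra|].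
      apply (Rmult_le_reg_r (s+t)); [lra|]. replace (t/(s+t)*(s+t)) with t by (field; lra). lra. }
    rewrite scal_add4, !ns_scal_assoc, scal_add_same in Hc.
    replace (t / (s + t) * - s + (1 - t / (s + t)) * t) with 0 in Hc by (field; lra).
    rewrite scal_0, ns_add_zero in Hc.
    assert (HP : D (ns_add (ns_scal (t / (s + t)) e) (ns_scal (1 - t / (s + t)) e'))).
    { apply (gadd _ _ _ Hg); apply (gscal _ _ _ Hg); auto. }
    assert (HD := ldom _ _ _ Hg _ c HP).
    rewrite (ladd _ _ _ Hg), !(lscal _ _ _ Hg) in HD; auto;
      try (apply (gscal _ _ _ Hg); auto).
    apply real_key; auto. lra. }
  assert (Hb : bound Aset).
  { exists ((Phi (ns_add ns_zero (ns_scal 1 z)) z0 - l ns_zero)/1).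
    intros r [e [s [b [He [Hs ->]]]]]. apply Hkey; auto; try lra. apply (g0 _ _ _ Hg). }
  assert (Hne : exists r, Aset r).
  { eexists. exists ns_zero, 1, z0. split; [apply (g0 _ _ _ Hg)|split; [lra|reflexivity]]. }
  destruct (completeness Aset Hb Hne) as [alpha [Ha1 Ha2]].
  assert (Hal1 : forall e s b, D e -> 0 < s ->
     (l e - Phi (ns_add e (ns_scal (-s) z)) b) / s <= alpha).
  { intros e s b He Hs. apply Ha1. exists e, s, b; repeat split; auto. }
  assert (Hal2 : forall e t b, D e -> 0 < t ->
     alpha <= (Phi (ns_add e (ns_scal t z)) b - l e)/t).
  { intros e t b He Ht. apply Ha2. intros r [e' [s [b' [He' [Hs ->]]]]]. apply Hkey; auto. }
  assert (Huniq : forall e1 e2 t1 t2, D e1 -> D e2 ->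
     ns_add e1 (ns_scal t1 z) = ns_add e2 (ns_scal t2 z) -> e1 = e2 /\ t1 = t2).
  { intros e1 e2 t1 t2 H1 H2 Heq.
    assert (Ht : t1 = t2).
    { apply NNPP; intro Hne12. apply Hz.
      assert (H0 : vsub (ns_add (ns_scal t1 z) e1) (ns_add (ns_scal t2 z) e2) = ns_zero).
      { rewrite (ns_add_comm _ e1), (ns_add_comm _ e2), Heq. apply vsub_self. }
      rewrite vsub_lin in H0. apply add_eq0_opp in H0.
      replace z with (ns_scal (/(t1 - t2)) (ns_scal (t1 - t2) z)).
      - apply (gscal _ _ _ Hg). rewrite H0, opp_scal. apply (gscal _ _ _ Hg).
        unfold vsub. apply (gadd _ _ _ Hg); auto. rewrite opp_scal; apply (gscal _ _ _ Hg); auto.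
      - rewrite ns_scal_assoc, Rinv_l, ns_scal_one; auto. lra. }
    subst t2. split; auto. eapply add_cancel_r; eauto. }
  set (D' := fun y => exists e t, D e /\ y = ns_add e (ns_scal t z)).
  set (l' := fun y => let et := epsilon (inhabits (@ns_zero Y, 0))
                  (fun et => D (fst et) /\ y = ns_add (fst et) (ns_scal (snd et) z)) in
                  l (fst et) + snd et * alpha).
  assert (Hl' : forall e t, D e -> l' (ns_add e (ns_scal t z)) = l e + t * alpha).
  { intros e t He. unfold l'; cbv zeta.
    match goal with |- context [epsilon ?i ?P] =>
      pose proof (epsilon_spec i P) as HS; set (et := epsilon i P) in * end.
    destruct HS as [H1 H2]; [exists (e, t); simpl; auto|].
    destruct (Huniq _ _ _ _ He H1 H2) as [E1 E2]. rewrite <- E1, <- E2. reflexivity. }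
  assert (HD'add : forall e1 t1 e2 t2, ns_add (ns_add e1 (ns_scal t1 z)) (ns_add e2 (ns_scal t2 z))
        = ns_add (ns_add e1 e2) (ns_scal (t1 + t2) z)).
  { intros. rewrite add4, scal_add_same. reflexivity. }
  assert (HD'scal : forall a e t, ns_scal a (ns_add e (ns_scal t z)) = ns_add (ns_scal a e) (ns_scal (a*t) z)).
  { intros. rewrite ns_scal_distr_l, ns_scal_assoc. reflexivity. }
  exists D', l'. split; [|split; [|split]].
  - constructor.
    + exists ns_zero, 0. split; [apply (g0 _ _ _ Hg)|]. rewrite scal_0, ns_add_zero; auto.
    + intros u v [e1 [t1 [H1 ->]]] [e2 [t2 [H2 ->]]]. rewrite HD'add.
      exists (ns_add e1 e2), (t1+t2). split; auto. apply (gadd _ _ _ Hg); auto.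
    + intros a u [e [t [He ->]]]. rewrite HD'scal. exists (ns_scal a e), (a*t); split; auto.
      apply (gscal _ _ _ Hg); auto.
    + intros u v [e1 [t1 [H1 ->]]] [e2 [t2 [H2 ->]]]. rewrite HD'add, !Hl'; auto.
      rewrite (ladd _ _ _ Hg); auto; ring. apply (gadd _ _ _ Hg); auto.
    + intros a u [e [t [He ->]]]. rewrite HD'scal, !Hl'; auto.
      rewrite (lscal _ _ _ Hg); auto; ring. apply (gscal _ _ _ Hg); auto.
    + intros u b [e [t [He ->]]]. rewrite Hl'; auto.
      destruct (Rtotal_order t 0) as [Hlt|[H0|Hgt]].
      * assert (Hs : 0 < -t) by lra.
        assert (HH := Hal1 e (-t) b He Hs). rewrite Ropp_involutive in HH.
        apply (Rmult_le_compat_l (-t)) in HH; [|lra].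
        replace (- t * ((l e - Phi (ns_add e (ns_scal t z)) b) / - t)) with
          (l e - Phi (ns_add e (ns_scal t z)) b) in HH by (field; lra). lra.
      * subst t. rewrite scal_0, ns_add_zero, Rmult_0_l, Rplus_0_r. apply (ldom _ _ _ Hg); auto.
      * assert (HH := Hal2 e t b He Hgt).
        apply (Rmult_le_compat_l t) in HH; [|lra].
        replace (t * ((Phi (ns_add e (ns_scal t z)) b - l e) / t)) with
          (Phi (ns_add e (ns_scal t z)) b - l e) in HH by (field; lra). lra.
  - intros e He. exists e, 0. split; auto. rewrite scal_0, ns_add_zero; auto.
  - intros e He. assert (Hee : ns_add e (ns_scal 0 z) = e) by (rewrite scal_0, ns_add_zero; auto).
    rewrite <- Hee at 2. rewrite Hl'; auto. ring.
  - exists ns_zero, 1. split; [apply (g0 _ _ _ Hg)|]. rewrite ns_scal_one, add_0l; auto.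
Qed.

Lemma HB {Y : NormedSpace} {Z : Type} (z0 : Z) (Phi : Y -> Z -> R)
  (Hconv : forall u v a b t, 0 <= t <= 1 -> exists c,
      Phi (ns_add (ns_scal t u) (ns_scal (1-t) v)) c <= t * Phi u a + (1-t) * Phi v b)
  (H0 : forall b, 0 <= Phi ns_zero b) :
  exists m : Y -> R, is_linear_functional m /\ forall y b, m y <= Phi y b.
Proof.
  set (T := {p : (Y -> Prop) * (Y -> R) | goodR Phi (fst p) (snd p)}).
  set (le := fun p q : T => sub (fst (proj1_sig p)) (fst (proj1_sig q)) /\
         forall y, fst (proj1_sig p) y -> snd (proj1_sig p) y = snd (proj1_sig q) y).
  assert (Hg0 : goodR Phi (fun y => y = ns_zero) (fun _ => 0)).
  { constructor; intros; subst; auto.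
    - apply ns_add_zero.
    - apply scal_zero.
    - ring.
    - ring. }
  set (p0 := exist (fun p => goodR Phi (fst p) (snd p)) ((fun y : Y => y = ns_zero), (fun _ : Y => 0)) Hg0 : T).
  assert (Hp0 : forall p, le p0 p).
  { intros [[D l] Hg]; split; simpl.
    - intros y ->. apply (g0 _ _ _ Hg).
    - intros y ->. symmetry. apply (good_l0 _ _ _ Hg). }
  assert (Hrefl : forall p, le p p) by (intros p; split; [intros y Hy; auto| auto]).
  assert (Htrans : forall p q r, le p q -> le q r -> le p r).
  { intros p q r [H1 H2] [H3 H4]; split.
    - intros y Hy; auto.
    - intros y Hy. rewrite H2; auto. }
  destruct (zorn le Hrefl Htrans) as [m Hm].
  - intros C HC.
    set (C' := fun p => C p \/ p = p0).
    assert (HC' : forall p q, C' p -> C' q -> exists r, C' r /\ le p r /\ le q r).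
    { intros p q Hp Hq.
      destruct Hp as [Hp| ->]; [|exists q; split; [|split]; auto].
      destruct Hq as [Hq| ->]; [|exists p; split; [|split]; auto; left; auto].
      destruct (HC p q Hp Hq); [exists q | exists p]; split; try split; auto; left; auto. }
    set (Ds := fun y => exists p, C' p /\ fst (proj1_sig p) y).
    set (ls := fun y => snd (proj1_sig (epsilon (inhabits p0) (fun p => C' p /\ fst (proj1_sig p) y))) y).
    assert (Hls : forall p y, C' p -> fst (proj1_sig p) y -> ls y = snd (proj1_sig p) y).
    { intros p y Hp Hy. unfold ls.
      destruct (epsilon_spec (inhabits p0) (fun p => C' p /\ fst (proj1_sig p) y)) as [H1 H2];
        [eauto|].
      set (q := epsilon _ _) in *.
      destruct (HC' p q Hp H1) as [r [_ [[_ Hpr] [_ Hqr]]]].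
      rewrite Hpr, Hqr; auto. }
    assert (Hgs : goodR Phi Ds ls).
    { constructor.
      - exists p0. split; [right; auto|simpl; auto].
      - intros u v [p [Hp Hu]] [q [Hq Hv]].
        destruct (HC' p q Hp Hq) as [r [Hr [[Hpr _] [Hqr _]]]].
        exists r; split; auto. destruct r as [[D l] Hg]; simpl in *. apply (gadd _ _ _ Hg); auto.
      - intros a u [p [Hp Hu]]. exists p; split; auto.
        destruct p as [[D l] Hg]; simpl in *. apply (gscal _ _ _ Hg); auto.
      - intros u v [p [Hp Hu]] [q [Hq Hv]].
        destruct (HC' p q Hp Hq) as [r [Hr [[Hpr _] [Hqr _]]]].
        assert (Hu' := Hpr u Hu). assert (Hv' := Hqr v Hv).
        rewrite (Hls r u), (Hls r v), (Hls r); auto.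
        + destruct r as [[D l] Hg]; simpl in *. apply (ladd _ _ _ Hg); auto.
        + destruct r as [[D l] Hg]; simpl in *. apply (gadd _ _ _ Hg); auto.
      - intros a u [p [Hp Hu]]. rewrite (Hls p u), (Hls p); auto.
        + destruct p as [[D l] Hg]; simpl in *. apply (lscal _ _ _ Hg); auto.
        + destruct p as [[D l] Hg]; simpl in *. apply (gscal _ _ _ Hg); auto.
      - intros u b [p [Hp Hu]]. rewrite (Hls p u); auto.
        destruct p as [[D l] Hg]; simpl in *. apply (ldom _ _ _ Hg); auto. }
    exists (exist (fun p => goodR Phi (fst p) (snd p)) (Ds, ls) Hgs).
    intros a Ha. split; simpl.
    + intros y Hy. exists a; split; [left; auto|auto].
    + intros y Hy. symmetry. apply Hls; auto. left; auto.
  - destruct m as [[D l] Hg] eqn:Em. simpl in *.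
    assert (Hall : forall y, D y).
    { intro z. apply NNPP; intro Hz.
      destruct (HB_ext z0 Phi Hconv D l Hg z Hz) as [D' [l' [Hg' [Hs [Hl Hz']]]]].
      destruct (Hm (exist _ (D', l') Hg')) as [Hs' _].
      - split; simpl; auto.
      - apply Hz. apply Hs'. auto. }
    exists l. split; [split|].
    + intros u v. apply (ladd _ _ _ Hg); auto.
    + intros a u. apply (lscal _ _ _ Hg); auto.
    + intros y b. apply (ldom _ _ _ Hg); auto.
Qed.

Fixpoint combo {Y : NormedSpace} (ys : list Y) (a : nat -> R) : Y :=
  match ys with
  | nil => ns_zero
  | y :: r => ns_add (ns_scal (a 0%nat) y) (combo r (fun i => a (S i)))
  end.

Fixpoint wt {Y : NormedSpace} (ys : list Y) (a : nat -> R) : R :=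
  match ys with
  | nil => 0
  | _ :: r => Rabs (a 0%nat) + wt r (fun i => a (S i))
  end.

Fixpoint inB {Y : NormedSpace} (ys : list Y) (A : R) (u : Y) : Prop :=
  match ys with
  | nil => u = ns_zero
  | y :: r => exists t v, Rabs t <= A /\ inB r A v /\ u = ns_add (ns_scal t y) v
  end.

Lemma wt_nonneg {Y : NormedSpace} (ys : list Y) a : 0 <= wt ys a.
Proof. revert a; induction ys; intros a0; simpl; [lra|]. specialize (IHys (fun i => a0 (S i))). pose proof (Rabs_pos (a0 0%nat)); lra. Qed.

Lemma combo_mix {Y : NormedSpace} (ys : list Y) a b t s :
  combo ys (fun i => t * a i + s * b i) = ns_add (ns_scal t (combo ys a)) (ns_scal s (combo ys b)).
Proof.
  revert a b; induction ys as [|y ys IH]; intros a b; simpl.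
  - rewrite !scal_zero, ns_add_zero; auto.
  - rewrite (IH (fun i => a (S i)) (fun i => b (S i))).
    rewrite scal_add4, !ns_scal_assoc, scal_add_same. reflexivity.
Qed.

Lemma combo_ext {Y : NormedSpace} (ys : list Y) a b : (forall i, a i = b i) -> combo ys a = combo ys b.
Proof.
  revert a b; induction ys as [|y ys IH]; intros a b H; simpl; auto.
  rewrite H, (IH _ (fun i => b (S i))); auto.
Qed.

Lemma wt_ext {Y : NormedSpace} (ys : list Y) a b : (forall i, a i = b i) -> wt ys a = wt ys b.
Proof.
  revert a b; induction ys as [|y ys IH]; intros a b H; simpl; auto.
  rewrite H, (IH _ (fun i => b (S i))); auto.
Qed.

Lemma combo_scal {Y : NormedSpace} (ys : list Y) a t :
  combo ys (fun i => t * a i) = ns_scal t (combo ys a).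
Proof.
  rewrite (combo_ext ys _ (fun i => t * a i + 0 * a i)) by (intro; ring).
  rewrite combo_mix, scal_0, ns_add_zero. auto.
Qed.

Lemma wt_mix {Y : NormedSpace} (ys : list Y) a b t s : 0 <= t -> 0 <= s ->
  wt ys (fun i => t * a i + s * b i) <= t * wt ys a + s * wt ys b.
Proof.
  intros Ht Hs. revert a b; induction ys as [|y ys IH]; intros a b; simpl; [lra|].
  specialize (IH (fun i => a (S i)) (fun i => b (S i))).
  assert (Rabs (t * a 0%nat + s * b 0%nat) <= t * Rabs (a 0%nat) + s * Rabs (b 0%nat)).
  { eapply Rle_trans; [apply Rabs_triang|]. rewrite !Rabs_mult, (Rabs_pos_eq t Ht), (Rabs_pos_eq s Hs); lra. }
  lra.
Qed.

Lemma wt_scal {Y : NormedSpace} (ys : list Y) a t : 0 <= t ->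
  wt ys (fun i => t * a i) = t * wt ys a.
Proof.
  intros Ht. revert a; induction ys as [|y ys IH]; intros a; simpl; [ring|].
  rewrite (IH (fun i => a (S i))), Rabs_mult, (Rabs_pos_eq t); auto; ring.
Qed.

Lemma combo_zero {Y : NormedSpace} (ys : list Y) : combo ys (fun _ => 0) = ns_zero.
Proof. induction ys; simpl; auto. rewrite IHys, scal_0, ns_add_zero; auto. Qed.

Lemma wt_zero {Y : NormedSpace} (ys : list Y) : wt ys (fun _ => 0) = 0.
Proof. induction ys; simpl; auto. rewrite IHys, Rabs_R0; ring. Qed.

Lemma combo_basis {Y : NormedSpace} (ys : list Y) y t : In y ys ->
  exists a, combo ys a = ns_scal t y /\ wt ys a = Rabs t.
Proof.
  induction ys as [|y0 ys IH]; intros H; [destruct H|].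
  destruct H as [->|H].
  - exists (fun i => match i with O => t | _ => 0 end). simpl.
    rewrite combo_zero, wt_zero, ns_add_zero. split; auto; ring.
  - destruct (IH H) as [a [H1 H2]]. exists (fun i => match i with O => 0 | S j => a j end). simpl.
    rewrite (combo_ext _ _ a), (wt_ext _ _ a) by auto. rewrite H1, H2, scal_0, add_0l, Rabs_R0.
    split; auto; ring.
Qed.

Lemma inB_of_wt {Y : NormedSpace} (ys : list Y) a A : wt ys a <= A -> inB ys A (combo ys a).
Proof.
  revert a; induction ys as [|y ys IH]; intros a H; simpl in *; auto.
  exists (a 0%nat), (combo ys (fun i => a (S i))). split; [|split; auto].
  - pose proof (wt_nonneg ys (fun i => a (S i))); lra.
  - apply IH. pose proof (Rabs_pos (a 0%nat)); lra.
Qed.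

Lemma Rabs_le_2 a b : Rabs a <= b -> -b <= a <= b.
Proof. unfold Rabs; destruct Rcase_abs; lra. Qed.

Lemma eps_lim (z C e : R) : (forall T, 0 < T -> z <= C / T + e) -> z <= e.
Proof.
  intro H. apply Rnot_lt_le; intro Hlt.
  destruct (Rle_dec C 0) as [HC|HC].
  - specialize (H 1 Rlt_0_1). unfold Rdiv in H. rewrite Rinv_1, Rmult_1_r in H. lra.
  - assert (HT : 0 < 2 * C / (z - e)) by (apply Rdiv_lt_0_compat; lra).
    specialize (H _ HT). replace (C / (2 * C / (z - e))) with ((z - e)/2) in H by (field; lra). lra.
Qed.

Lemma comb_uv {Y : NormedSpace} (a b k : R) (u v : Y) :
  ns_add (ns_scal a u) (ns_scal b (ns_add v (ns_scal k (vsub v u)))) =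
  ns_add (ns_scal (a - b*k) u) (ns_scal (b + b*k) v).
Proof.
  unfold vsub. rewrite opp_scal, !ns_scal_distr_l, !ns_scal_assoc.
  rewrite (ns_add_assoc (ns_scal b v)), scal_add_same.
  rewrite (ns_add_comm (ns_scal (b + b * k) v)), ns_add_assoc, scal_add_same.
  f_equal; f_equal; ring.
Qed.

Lemma conv_lip1 {Y : NormedSpace} (g : Y -> R) (c : R) : 0 <= c -> convex_fun g ->
  (forall y, Rabs (g y) <= c * (1 + ns_norm y)) ->
  forall u v, g v - g u <= c * ns_norm (vsub v u).
Proof.
  intros Hc Hconv Hb u v. set (d := ns_norm (vsub v u)).
  destruct (Req_dec d 0) as [Hd|Hd].
  { apply ns_norm_eq0, vsub_eq0 in Hd. subst v. unfold d. rewrite vsub_self, norm_zero. lra. }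
  assert (Hdp : 0 < d) by (pose proof (ns_norm_nonneg (vsub v u)); unfold d in *; lra).
  set (K := c * (2 + ns_norm u + ns_norm v)).
  assert (HK : 0 <= K) by (unfold K; pose proof (ns_norm_nonneg u); pose proof (ns_norm_nonneg v); nra).
  apply (eps_lim _ (d * K)). intros T HT.
  set (w := ns_add v (ns_scal (T/d) (vsub v u))).
  set (lam := T / (T + d)).
  assert (Hlam : 0 <= lam <= 1).
  { unfold lam; split; [apply Rlt_le, Rdiv_lt_0_compat; lra|].
    apply (Rmult_le_reg_r (T+d)); [lra|]. replace (T/(T+d)*(T+d)) with T by (field; lra). lra. }
  assert (Hid : ns_add (ns_scal lam u) (ns_scal (1 - lam) w) = v).
  { unfold w. rewrite comb_uv.
    replace (lam - (1 - lam) * (T / d)) with 0 by (unfold lam; field; lra).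
    replace (1 - lam + (1 - lam) * (T / d)) with 1 by (unfold lam; field; lra).
    rewrite scal_0, add_0l, ns_scal_one; auto. }
  assert (H1 := Hconv u w lam Hlam). rewrite Hid in H1.
  assert (Hw : ns_norm w <= ns_norm v + T).
  { unfold w. eapply Rle_trans; [apply ns_norm_triangle|].
    rewrite ns_norm_scal, Rabs_pos_eq by (apply Rlt_le, Rdiv_lt_0_compat; lra).
    fold d. replace (T / d * d) with T by (field; lra). lra. }
  assert (Hgw := Hb w). assert (Hgu := Hb u).
  apply Rabs_le_2 in Hgw. apply Rabs_le_2 in Hgu.
  assert (HX : g w - g u <= K + c * T) by (unfold K; nra).
  assert (H2 : g v - g u <= (1 - lam) * (g w - g u)) by nra.
  assert (H1l : 0 <= 1 - lam) by lra.
  assert (H3 : g v - g u <= (1 - lam) * (K + c * T)) by nra.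
  replace (1 - lam) with (d / (T + d)) in H3 by (unfold lam; field; lra).
  assert (Heq : d * K / T + c * d - d / (T + d) * (K + c * T) = d * K * d / (T * (T + d)) + c * d * d / (T + d))
    by (field; lra).
  assert (0 <= d * K * d / (T * (T + d))).
  { apply Rmult_le_pos; [nra|]. apply Rlt_le, Rinv_0_lt_compat. nra. }
  assert (0 <= c * d * d / (T + d)).
  { apply Rmult_le_pos; [nra|]. apply Rlt_le, Rinv_0_lt_compat. nra. }
  lra.
Qed.

Lemma conv_lip {Y : NormedSpace} (g : Y -> R) (c : R) : 0 <= c -> convex_fun g ->
  (forall y, Rabs (g y) <= c * (1 + ns_norm y)) ->
  forall u v, Rabs (g u - g v) <= c * ns_norm (vsub u v).
Proof.
  intros Hc Hconv Hb u v. apply Rabs_le. split.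
  - assert (H := conv_lip1 g c Hc Hconv Hb u v). rewrite norm_vsub_sym in H. lra.
  - assert (H := conv_lip1 g c Hc Hconv Hb v u). lra.
Qed.

Lemma net1_aux (A eps : R) (N : nat) : 0 < eps -> forall t, -A <= t <= -A + INR N * eps ->
  exists j, (j <= N)%nat /\ Rabs (t - (-A + INR j * eps)) <= eps.
Proof.
  intros He. induction N as [|N IH]; intros t Ht.
  - exists 0%nat. split; auto. simpl in *. apply Rabs_le. lra.
  - destruct (Rle_dec t (-A + INR N * eps)) as [H|H].
    + destruct (IH t) as [j [Hj Hj2]]; [lra|]. exists j; split; auto.
    + exists (S N). split; auto. rewrite S_INR in *. apply Rabs_le. nra.
Qed.

Lemma net1 (A eps : R) : 0 < eps -> exists T : list R, forall t, Rabs t <= A ->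
  exists tau, In tau T /\ Rabs (t - tau) <= eps.
Proof.
  intros He. destruct (INR_unbounded (2 * A / eps)) as [N HN].
  exists (map (fun j => -A + INR j * eps) (seq 0 (S N))).
  intros t Ht. apply Rabs_le_2 in Ht.
  destruct (net1_aux A eps N He t) as [j [Hj Hj2]].
  { split; [lra|]. apply (Rmult_gt_compat_r eps) in HN; auto.
    replace (2 * A / eps * eps) with (2*A) in HN by (field; lra). lra. }
  exists (-A + INR j * eps). split; auto. apply (in_map (fun j => -A + INR j * eps) _ j). apply in_seq. lia.
Qed.

Lemma netB {Y : NormedSpace} (ys : list Y) (A : R) : forall h, 0 < h ->
  exists S : list Y, forall u, inB ys A u -> exists s, In s S /\ ns_norm (vsub u s) <= h.
Proof.
  induction ys as [|y ys IH]; intros h Hh.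
  - exists (ns_zero :: nil). intros u Hu. simpl in Hu. subst u. exists ns_zero.
    split; [left; auto|]. rewrite vsub_self, norm_zero. lra.
  - destruct (IH (h/2)) as [S' HS']; [lra|].
    assert (Hy : 0 < h / (2 * (ns_norm y + 1))).
    { pose proof (ns_norm_nonneg y). apply Rdiv_lt_0_compat; lra. }
    destruct (net1 A _ Hy) as [T HT].
    exists (flat_map (fun tau => map (fun s => ns_add (ns_scal tau y) s) S') T).
    intros u [t [v [Ht [Hv ->]]]].
    destruct (HT t Ht) as [tau [Htau1 Htau2]]. destruct (HS' v Hv) as [s [Hs1 Hs2]].
    exists (ns_add (ns_scal tau y) s). split.
    + apply in_flat_map. exists tau. split; auto. apply in_map; auto.
    + rewrite vsub_lin. eapply Rle_trans; [apply ns_norm_triangle|]. rewrite ns_norm_scal.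
      pose proof (ns_norm_nonneg y).
      assert (Rabs (t - tau) * ns_norm y <= h / 2).
      { apply Rle_trans with (h / (2 * (ns_norm y + 1)) * ns_norm y).
        - apply Rmult_le_compat_r; auto.
        - apply (Rmult_le_reg_r (2 * (ns_norm y + 1))); [lra|].
          replace (h / (2 * (ns_norm y + 1)) * ns_norm y * (2 * (ns_norm y + 1))) with (h * ns_norm y)
            by (field; lra). nra. }
      lra.
Qed.

Lemma ev_list {A : Type} (S : list A) (P : nat -> A -> Prop) :
  (forall s, In s S -> exists N, forall k, (N <= k)%nat -> P k s) ->
  exists N, forall k, (N <= k)%nat -> forall s, In s S -> P k s.
Proof.
  induction S as [|a S IH]; intros H.
  - exists 0%nat. intros k _ s [].
  - destruct (H a (or_introl eq_refl)) as [N1 HN1].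
    destruct IH as [N2 HN2]. { intros s Hs; apply H; right; auto. }
    exists (Nat.max N1 N2). intros k Hk s [<-|Hs].
    + apply HN1; lia.
    + apply HN2; auto; lia.
Qed.

Lemma lin_zero {Y : NormedSpace} (x : Y -> R) : is_linear_functional x -> x ns_zero = 0.
Proof. intros [_ H]. rewrite <- (scal_0 (@ns_zero Y)), H. ring. Qed.

Lemma lin_vsub {Y : NormedSpace} (x : Y -> R) : is_linear_functional x ->
  forall u v, x (vsub u v) = x u - x v.
Proof. intros [H1 H2] u v. unfold vsub. rewrite H1, opp_scal, H2. ring. Qed.

Lemma fd {Y : NormedSpace} (gs : nat -> Y -> R) (g : Y -> R) (x : Y -> R) (c Mx s0 : R)
  (ys : list Y) (e1 dl : R) :
  (forall n, convex_fun (gs n)) -> (forall y, Un_cv (fun n => gs n y) (g y)) -> 0 < c ->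
  (forall n y, Rabs (gs n y) <= c * (1 + ns_norm y)) ->
  is_linear_functional x -> 0 <= Mx -> (forall u, Rabs (x u) <= Mx * ns_norm u) ->
  (forall y, x y - g y <= s0) -> 0 < e1 -> 0 < dl ->
  exists N, forall k, (N <= k)%nat -> forall a,
    0 <= gs k (combo ys a) - x (combo ys a) + s0 + dl + e1 * wt ys a.
Proof.
  intros Hconv Hcv Hc Hb Hx HMx HxM Hs He1 Hdl.
  set (L := c + Mx). set (R0 := c + Rabs s0). set (A := (dl/2 + R0)/e1).
  assert (HR0 : 0 <= R0) by (unfold R0; pose proof (Rabs_pos s0); lra).
  assert (HA : 0 < A) by (unfold A; apply Rdiv_lt_0_compat; lra).
  set (h := dl / (4 * (L + 1))).
  assert (HL : 0 <= L) by (unfold L; lra).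
  assert (Hh : 0 < h) by (unfold h; apply Rdiv_lt_0_compat; lra).
  assert (HLh : L * h <= dl / 4).
  { unfold h. apply (Rmult_le_reg_r (4 * (L+1))); [lra|].
    replace (L * (dl / (4 * (L + 1))) * (4 * (L + 1))) with (L * dl) by (field; lra). nra. }
  destruct (netB ys A h Hh) as [S HS].
  destruct (ev_list S (fun k s => g s - dl/4 <= gs k s)) as [N HN].
  { intros s _. destruct (Hcv s (dl/4)) as [N HN]; [lra|]. exists N. intros k Hk.
    specialize (HN k Hk). unfold Rdist in HN. apply Rlt_le, Rabs_le_2 in HN. lra. }
  exists N. intros k Hk.
  set (rho := fun u => gs k u - x u + s0).
  assert (Hlip : forall u v, rho v - L * ns_norm (vsub u v) <= rho u).
  { intros u v. unfold rho.
    assert (H1 := conv_lip (gs k) c (Rlt_le _ _ Hc) (Hconv k) (Hb k) u v).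
    assert (H2 := HxM (vsub u v)). rewrite lin_vsub in H2; auto.
    apply Rabs_le_2 in H1. apply Rabs_le_2 in H2. unfold L. lra. }
  assert (HCB : forall u, inB ys A u -> - (dl/2) <= rho u).
  { intros u Hu. destruct (HS u Hu) as [s [Hs1 Hs2]].
    assert (H1 := Hlip u s). assert (H2 := HN k Hk s Hs1). assert (H3 := Hs s).
    assert (L * ns_norm (vsub u s) <= L * h) by (apply Rmult_le_compat_l; auto).
    unfold rho in *. lra. }
  intros a. fold (rho (combo ys a)).
  set (W := wt ys a). set (u := combo ys a).
  destruct (Rle_dec W A) as [HW|HW].
  - assert (H := HCB u (inB_of_wt ys a A HW)). pose proof (wt_nonneg ys a). fold W in H0.
    assert (0 <= e1 * W) by (apply Rmult_le_pos; lra). lra.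
  - set (lam := A / W).
    assert (HWp : 0 < W) by lra.
    assert (Hlam : 0 < lam < 1).
    { unfold lam; split; [apply Rdiv_lt_0_compat; lra|].
      apply (Rmult_lt_reg_r W); auto. replace (A / W * W) with A by (field; lra). lra. }
    assert (Hin : inB ys A (ns_scal lam u)).
    { unfold u. rewrite <- combo_scal. apply inB_of_wt. rewrite wt_scal by lra. fold W.
      unfold lam. right. field. lra. }
    assert (H1 := HCB _ Hin).
    assert (Hc2 := Hconv k u ns_zero lam (conj (Rlt_le _ _ (proj1 Hlam)) (Rlt_le _ _ (proj2 Hlam)))).
    rewrite scal_zero, ns_add_zero in Hc2.
    assert (Hg0 := Hb k ns_zero). rewrite norm_zero in Hg0. apply Rabs_le_2 in Hg0.
    assert (Hxl : x (ns_scal lam u) = lam * x u) by (apply (proj2 Hx)).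
    unfold rho in H1. rewrite Hxl in H1.
    assert (Hs0 := Rle_abs s0).
    assert (Hkey : - (dl / 2) - R0 <= lam * rho u).
    { unfold rho, R0. assert ((1 - lam) * gs k ns_zero <= (1 - lam) * c) by (apply Rmult_le_compat_l; lra).
      assert ((1 - lam) * s0 <= 1 * Rabs s0).
      { apply Rle_trans with ((1-lam) * Rabs s0). apply Rmult_le_compat_l; lra.
        apply Rmult_le_compat_r; [apply Rabs_pos|lra]. }
      assert ((1 - lam) * c <= c) by nra.
      nra. }
    assert (He1A : e1 * A = dl/2 + R0) by (unfold A; field; lra).
    assert (Hrho : - (e1 * W) <= rho u).
    { apply (Rmult_le_reg_l lam); [lra|].
      replace (lam * - (e1 * W)) with (- (e1 * A)) by (unfold lam; field; lra). lra. }
    lra.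
Qed.

Lemma lin_upper {Y : NormedSpace} (m : Y -> R) al be : is_linear_functional m ->
  (forall y, m y <= al + be * ns_norm y) -> forall y, m y <= be * ns_norm y.
Proof.
  intros [H1 H2] Hb y. apply (eps_lim _ al). intros T HT.
  specialize (Hb (ns_scal T y)). rewrite H2, ns_norm_scal, Rabs_pos_eq in Hb by lra.
  apply (Rmult_le_reg_l T); auto.
  replace (T * (al / T + be * ns_norm y)) with (al + be * (T * ns_norm y)) by (field; lra). lra.
Qed.

Lemma lin_bound {Y : NormedSpace} (m : Y -> R) al be : is_linear_functional m ->
  (forall y, m y <= al + be * ns_norm y) -> forall y, Rabs (m y) <= be * ns_norm y.
Proof.
  intros Hl Hb y. apply Rabs_le. split.
  - assert (H := lin_upper m al be Hl Hb (ns_scal (-1) y)).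
    rewrite (proj2 Hl), ns_norm_scal, Rabs_m1 in H. lra.
  - apply (lin_upper m al be Hl Hb).
Qed.

Lemma core {Y : NormedSpace} (gs : nat -> Y -> R) (g : Y -> R) (c : R) (x : dual Y) (s0 : R)
  (ys : list Y) (eps dl : R) :
  (forall n, convex_fun (gs n)) -> (forall y, Un_cv (fun n => gs n y) (g y)) -> 0 < c ->
  (forall n y, Rabs (gs n y) <= c * (1 + ns_norm y)) ->
  (forall y, pair x y - g y <= s0) -> 0 < eps -> 0 < dl ->
  exists N, forall k, (N <= k)%nat -> exists x' : dual Y,
    (forall y, In y ys -> Rabs (pair x' y - pair x y) < eps) /\
    (forall y, pair x' y - gs k y <= s0 + dl).
Proof.
  intros Hconv Hcv Hc Hb Hs Heps Hdl.
  destruct x as [xf [Hlin [M HM]]]. unfold pair in *; simpl in *.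
  set (Mx := Rmax M 0).
  assert (HMx : 0 <= Mx) by apply Rmax_r.
  assert (HxM : forall u, Rabs (xf u) <= Mx * ns_norm u).
  { intro u. eapply Rle_trans; [apply HM|]. apply Rmult_le_compat_r; [apply ns_norm_nonneg|apply Rmax_l]. }
  set (e1 := eps / 2).
  destruct (fd gs g xf c Mx s0 ys e1 dl Hconv Hcv Hc Hb Hlin HMx HxM Hs) as [N HN];
    [unfold e1; lra|auto|].
  exists N. intros k Hk.
  set (Phi := fun (y : Y) (a : nat -> R) =>
     gs k (ns_add y (combo ys a)) - xf (ns_add y (combo ys a)) + s0 + dl + e1 * wt ys a).
  destruct (HB (fun _ => 0) Phi) as [m [Hm1 Hm2]].
  - intros u v a b t Ht. exists (fun i => t * a i + (1 - t) * b i). unfold Phi.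
    rewrite combo_mix, <- scal_add4.
    assert (H1 := Hconv k (ns_add u (combo ys a)) (ns_add v (combo ys b)) t Ht).
    rewrite (proj1 Hlin), !(proj2 Hlin).
    assert (H2 := wt_mix ys a b t (1 - t) (proj1 Ht) ltac:(lra)).
    assert (e1 * wt ys (fun i => t * a i + (1 - t) * b i) <= e1 * (t * wt ys a + (1 - t) * wt ys b))
      by (apply Rmult_le_compat_l; unfold e1; lra).
    lra.
  - intros b. unfold Phi. rewrite add_0l. apply (HN k Hk b).
  - assert (HPhi0 : forall y, Phi y (fun _ => 0) = gs k y - xf y + s0 + dl).
    { intro y. unfold Phi. rewrite combo_zero, wt_zero, ns_add_zero. ring. }
    assert (Hmb : forall y, Rabs (m y) <= (c + Mx) * ns_norm y).
    { apply (lin_bound m (c + Rabs s0 + dl)); auto.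
      intro y. eapply Rle_trans; [apply (Hm2 y (fun _ => 0))|]. rewrite HPhi0.
      assert (H1 := Hb k y). assert (H2 := HxM y). apply Rabs_le_2 in H1. apply Rabs_le_2 in H2.
      pose proof (Rle_abs s0). lra. }
    assert (Hx'l : is_linear_functional (fun y => xf y + m y)).
    { split.
      - intros u v. rewrite (proj1 Hlin), (proj1 Hm1). ring.
      - intros a u. rewrite (proj2 Hlin), (proj2 Hm1). ring. }
    assert (Hx'b : is_bounded_functional (fun y => xf y + m y)).
    { exists (Mx + (c + Mx)). intro u. eapply Rle_trans; [apply Rabs_triang|].
      specialize (HxM u). specialize (Hmb u). lra. }
    exists (exist _ (fun y => xf y + m y) (conj Hx'l Hx'b)). simpl. split.
    + intros y Hy.
      set (C0 := gs k ns_zero - xf ns_zero + s0 + dl).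
      assert (Hside : forall t, m (ns_scal (- t) y) <= C0 + e1 * Rabs t).
      { intro t. destruct (combo_basis ys y t Hy) as [a [Ha1 Ha2]].
        eapply Rle_trans; [apply (Hm2 _ a)|]. unfold Phi. rewrite Ha1, Ha2, scal_add_same.
        replace (- t + t) with 0 by ring. rewrite scal_0. unfold C0; lra. }
      assert (Hup : m y <= e1).
      { apply (eps_lim _ C0). intros T HT. specialize (Hside (- T)).
        rewrite Ropp_involutive, (proj2 Hm1), Rabs_Ropp, Rabs_pos_eq in Hside by lra.
        apply (Rmult_le_reg_l T); auto.
        replace (T * (C0 / T + e1)) with (C0 + e1 * T) by (field; lra). lra. }
      assert (Hlo : - m y <= e1).
      { apply (eps_lim _ C0). intros T HT. specialize (Hside T).
        rewrite (proj2 Hm1), Rabs_pos_eq in Hside by lra.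
        apply (Rmult_le_reg_l T); auto.
        replace (T * (C0 / T + e1)) with (C0 + e1 * T) by (field; lra). lra. }
      replace (xf y + m y - xf y) with (m y) by ring. apply Rle_lt_trans with e1.
      * apply Rabs_le; lra.
      * unfold e1; lra.
    + intros y. specialize (Hm2 y (fun _ => 0)). rewrite HPhi0 in Hm2. lra.
Qed.

Theorem mainTheorem16 (Y : NormedSpace) (gs : nat -> Y -> R) (g : Y -> R) :
  (forall n, convex_fun (gs n)) ->
  (forall y, Un_cv (fun n => gs n y) (g y)) ->
  (exists c, 0 < c /\ forall n y, Rabs (gs n y) <= c * (1 + ns_norm y)) ->
  gamma_converges (fun n => conjugate (gs n)) (conjugate g).
Proof.
  intros Hconv Hcv [c [Hc Hb]] x.
  set (f := fun n => conjugate (gs n)).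
  assert (Ha : Rbar_le (conjugate g x) (gamma_liminf f x)).
  { unfold conjugate at 1. apply sup_le. intros a [y ->]. apply Finite_le_eps. intros e He.
    set (V := fun x' : dual Y => Rabs (pair x' y - pair x y) < e/2).
    assert (HV : weakstar_nbhd x V).
    { exists (y :: nil), (e/2). split; [lra|]. intros x' Hx'. apply Hx'. left; auto. }
    destruct (Hcv y (e/2)) as [N HN]; [lra|].
    eapply Rbar_le_trans; [|apply le_sup; exists V; split; [exact HV|reflexivity]].
    apply (liminf_ge _ _ N). intros k Hk. unfold inf_on. apply le_inf.
    intros a [x' [Hx' ->]]. unfold f, conjugate.
    eapply Rbar_le_trans; [|apply le_sup; exists y; reflexivity].
    simpl. specialize (HN k Hk). unfold Rdist in HN. unfold V in Hx'.
    apply Rabs_def2 in HN. apply Rabs_def2 in Hx'. lra. }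
  assert (Hb2 : Rbar_le (gamma_liminf f x) (gamma_limsup f x)).
  { unfold gamma_liminf. apply sup_le. intros a [V [HV ->]].
    eapply Rbar_le_trans; [apply liminf_le_limsup|]. apply le_sup. exists V; auto. }
  assert (Hc3 : Rbar_le (gamma_limsup f x) (conjugate g x)).
  { unfold gamma_limsup. apply sup_le. intros a [V [HV ->]].
    destruct (conjugate g x) as [s0| |] eqn:EG.
    - assert (Hs : forall y, pair x y - g y <= s0).
      { intro y. assert (H := le_sup (fun a => exists y : Y, a = Finite (pair x y - g y))
            (Finite (pair x y - g y)) (ex_intro _ y eq_refl)).
        fold (conjugate g x) in H. rewrite EG in H. exact H. }
      apply le_Finite_eps. intros dl Hdl.
      destruct HV as [ys [eps [Heps HV]]].
      destruct (core gs g c x s0 ys eps dl Hconv Hcv Hc Hb Hs Heps Hdl) as [N HN].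
      apply (limsup_le _ _ N). intros k Hk.
      destruct (HN k Hk) as [x' [Hx'1 Hx'2]].
      unfold inf_on. eapply Rbar_le_trans; [apply inf_le; exists x'; split; [apply HV; exact Hx'1|reflexivity]|].
      unfold f, conjugate. apply sup_le. intros a [y ->]. simpl. apply Hx'2.
    - destruct (Rbar_limsup _); simpl; auto.
    - exfalso. assert (H := le_sup (fun a => exists y : Y, a = Finite (pair x y - g y))
            (Finite (pair x ns_zero - g ns_zero)) (ex_intro _ ns_zero eq_refl)).
      fold (conjugate g x) in H. rewrite EG in H. exact H. }
  split.
  - apply Rbar_le_antisym; auto. eapply Rbar_le_trans; eauto.
  - apply Rbar_le_antisym; auto. eapply Rbar_le_trans; eauto.
Qed.
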